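(* Let $p,q$ be coprime integers with $|p|\ge 2$ and $|q|\ge 2$, let $T=T(p,q)$, write $c=c(T)$, and set $\rho=\rho(T)=\left|\frac{6v_3(T)}{v_2(T)}\right|$. Then $$24\,v_2(T)\,(c-\rho)^2=c\left((c-\rho)^2-1\right)(2\rho-c),$$ and $$c=\rho-\tfrac{1}{2}\left(\sqrt{(\rho-1)^2-24v_2(T)}+\sqrt{(\rho+1)^2-24v_2(T)}\right).$$
   Context: $v_2$ and $v_3$ are the first two Vassiliev knot invariants, normalized as follows. The space of additive Vassiliev invariants of type three splits into invariants unchanged under taking mirror images and invariants that change sign under mirror image; $v_2$ (resp.\ $v_3$) is the element of the first (resp.\ second) one-dimensional summand taking the value $1$ on the positive trefoil. For coprime integers $p,q$ with $|p|,|q|\ge 2$, $T(p,q)$ denotes the (nontrivial) $(p,q)$-torus knot, and its invariants are known to be $$v_2(T(p,q))=\tfrac{1}{24}(p^2-1)(q^2-1),\qquad v_3(T(p,q))=\tfrac{1}{144}\,pq\,(p^2-1)(q^2-1).$$ $c(T)$ denotes the crossing number; for torus knots it is known that $c(T(p,q))=|q|(|p|-1)$ when $|p|<|q|$ (and symmetrically $c(T(p,q))=|p|(|q|-1)$ when $|q|<|p|$). *)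

(* Defs.v *)
(* Knot invariants of torus knots T(p,q), given by the
   closed formulas stated as known facts in the paper's context. *)
From mathcomp Require Import all_boot all_order all_algebra.
From mathcomp Require Import all_reals.
Set Implicit Arguments. Unset Strict Implicit. Unset Printing Implicit Defensive.
Import Order.TTheory GRing.Theory Num.Theory.
Local Open Scope ring_scope.

Definition v2_torus (R : realType) (p q : int) : R :=
  ((p ^+ 2 - 1) * (q ^+ 2 - 1))%:~R / 24%:R.

Definition v3_torus (R : realType) (p q : int) : R :=
  (p * q * (p ^+ 2 - 1) * (q ^+ 2 - 1))%:~R / 144%:R.

Definition crossing_torus (p q : int) : nat :=
  if (`|p| < `|q|)%N then (`|q| * (`|p| - 1))%N else (`|p| * (`|q| - 1))%N.

Definition rho_torus (R : realType) (p q : int) : R :=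
  `| 6%:R * v3_torus R p q / v2_torus R p q |.

(* Main.v *)
Require Import Defs.
From mathcomp Require Import all_boot all_order all_algebra.
From mathcomp Require Import all_reals.
From mathcomp Require Import ring lra.
Import Order.TTheory GRing.Theory Num.Theory.
Local Open Scope ring_scope.

Theorem proposition3p6 (R : realType) (p q : int) :
  coprimez p q -> (2 <= `|p|)%N -> (2 <= `|q|)%N ->
  let c : R := (crossing_torus p q)%:R in
  let rho : R := rho_torus R p q in
  let v2 : R := v2_torus R p q in
  24%:R * v2 * (c - rho) ^+ 2 = c * ((c - rho) ^+ 2 - 1) * (2%:R * rho - c)
  /\
  c = rho - 2%:R^-1 * (Num.sqrt ((rho - 1) ^+ 2 - 24%:R * v2)
                       + Num.sqrt ((rho + 1) ^+ 2 - 24%:R * v2)).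
Proof.
move=> _ hp hq c rho v2.
set A : R := (`|p|%N)%:R.
set B : R := (`|q|%N)%:R.
have hA : 2 <= A by rewrite /A (ler_nat R 2).
have hB : 2 <= B by rewrite /B (ler_nat R 2).
have hP : (p%:~R : R) ^+ 2 = A ^+ 2 by rewrite /A natr_absz intr_norm real_normK ?num_real.
have hQ : (q%:~R : R) ^+ 2 = B ^+ 2 by rewrite /B natr_absz intr_norm real_normK ?num_real.
have hv2 : v2 = (A ^+ 2 - 1) * (B ^+ 2 - 1) / 24%:R.
  rewrite /v2 /v2_torus !(rmorphM, rmorphB, rmorphXn, rmorph1) /=.
  by rewrite -!expr2 hP hQ.
have hrho : rho = A * B.
  rewrite /rho /rho_torus /v3_torus -/(v2_torus R p q) -/v2 hv2.
  rewrite !(rmorphM, rmorphB, rmorphXn, rmorph1) /= -!expr2 hP hQ.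
  have -> : 6%:R * ((p%:~R : R) * q%:~R * (A ^+ 2 - 1) * (B ^+ 2 - 1) / 144%:R) /
     ((A ^+ 2 - 1) * (B ^+ 2 - 1) / 24%:R) = p%:~R * q%:~R.
    field; rewrite -/A -/B; apply/andP; split; rewrite subr_eq0; apply/eqP; nra.
  by rewrite normrM -!intr_norm -!natr_absz.
have hc : c = if (`|p| < `|q|)%N then A * B - B else A * B - A.
  rewrite /c /crossing_torus; case: ifP => _;
  by rewrite natrM natrB ?(leq_trans _ hp) ?(leq_trans _ hq) // mulrBr mulr1 mulrC.
have hs1 : (rho - 1) ^+ 2 - 24%:R * v2 = (A - B) ^+ 2.
  by rewrite hrho hv2; field.
have hs2 : (rho + 1) ^+ 2 - 24%:R * v2 = (A + B) ^+ 2.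
  by rewrite hrho hv2; field.
rewrite hs1 hs2 !sqrtr_sqr (@ger0_norm _ (A + B)); last by lra.
split.
  by rewrite hv2 hc hrho; case: ifP => _; field.
rewrite hc hrho; case: ifP => h.
  have hAB : A < B by rewrite /A /B ltr_nat.
  rewrite ltr0_norm; last by lra.
  by field.
have hAB : B <= A by rewrite /A /B ler_nat leqNgt h.
rewrite ger0_norm; last by lra.
by field.
Qed.
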